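(* Let $\Gamma$ be a strongly regular graph. Then $E(\Gamma)=E(\bar\Gamma)$ and $\Gamma$, $\bar\Gamma$ are not isospectral if and only if $\Gamma$ has $OA(n,m)$ parameters, i.e. parameters $(n^2, m(n-1), m^2-3m+n, m(m-1))$, for some positive integers $n,m$ with $m\neq n+1$ and $m\neq \tfrac{n+1}{2}$.
   Context: A strongly regular graph with parameters $(n,k,e,d)$ is a $k$-regular simple graph on $n$ vertices, neither complete nor edgeless, in which adjacent vertices have $e$ common neighbours and distinct non-adjacent vertices have $d$ common neighbours. $\bar\Gamma$ is the complement. The energy $E$ is the sum of the absolute values of the adjacency eigenvalues (with multiplicity); isospectral means equal adjacency spectra with multiplicities. *)

(* Defs.v *)
From HB Require Import structures.
From mathcomp Require Import all_boot all_order all_algebra all_field.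
Set Implicit Arguments. Unset Strict Implicit. Unset Printing Implicit Defensive.
Import Order.TTheory GRing.Theory Num.Theory.
Local Open Scope ring_scope.

Definition simple_graph N (adj : rel 'I_N) : Prop :=
  (forall u v, adj u v = adj v u) /\ (forall u, ~~ adj u u).

Definition complement N (adj : rel 'I_N) : rel 'I_N :=
  fun u v => (u != v) && ~~ adj u v.

Definition common_nbrs N (adj : rel 'I_N) (u v : 'I_N) : nat :=
  #|[set w | adj u w && adj v w]|.

Definition srg N (adj : rel 'I_N) (k e d : nat) : Prop :=
  simple_graph adj /\
  [/\ (forall u, #|[set w | adj u w]| = k),
      (exists u v, u != v /\ ~~ adj u v),
      (exists u v, adj u v),
      (forall u v, adj u v -> common_nbrs adj u v = e)
    & (forall u v, u != v -> ~~ adj u v -> common_nbrs adj u v = d)].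

Definition adjmx N (adj : rel 'I_N) : 'M[algC]_N :=
  \matrix_(i, j) (adj i j)%:R.

(* Eigenvalues with multiplicity: the roots of the characteristic polynomial. *)
Definition spectrum N (A : 'M[algC]_N) : seq algC :=
  sval (closed_field_poly_normal (char_poly A)).

Lemma spectrumP N (A : 'M[algC]_N) :
  char_poly A = \prod_(z <- spectrum A) ('X - z%:P).
Proof.
rewrite /spectrum; case: closed_field_poly_normal => r /= {1}->.
by rewrite (monicP (char_poly_monic A)) scale1r.
Qed.

Definition energy N (adj : rel 'I_N) : algC :=
  \sum_(z <- spectrum (adjmx adj)) `|z|.

Definition isospectral N (adj1 adj2 : rel 'I_N) : Prop :=
  perm_eq (spectrum (adjmx adj1)) (spectrum (adjmx adj2)).

(* Main.v *)
Require Import Defs.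
From HB Require Import structures.
From mathcomp Require Import all_boot all_order all_algebra all_field.
From mathcomp Require Import spectral.
From mathcomp Require Import zify ring lra.
Set Implicit Arguments. Unset Strict Implicit. Unset Printing Implicit Defensive.
Import Order.TTheory GRing.Theory Num.Theory.
Local Open Scope ring_scope.

Lemma char_poly_conj n (P M : 'M[algC]_n) : P \in unitmx ->
  char_poly (P *m M *m invmx P) = char_poly M.
Proof.
move=> Pu; rewrite /char_poly.
set P' := map_mx polyC P; set Q' := map_mx polyC (invmx P).
have PQ : P' *m Q' = 1%:M by rewrite -map_mxM mulmxV // map_mx1.
have -> : char_poly_mx (P *m M *m invmx P) = P' *m char_poly_mx M *m Q'.
  rewrite /char_poly_mx !map_mxM -/P' -/Q' mulmxBr mulmxBl.
  rewrite mul_mx_scalar -scalemxAl PQ scalemx1.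
  by [].
rewrite !det_mulmx mulrC mulrA -det_mulmx.
by rewrite (mulmx1C PQ) det1 mul1r.
Qed.

Lemma spectrum_size n (M : 'M[algC]_n) : size (spectrum M) = n.
Proof.
have := size_char_poly M; rewrite spectrumP size_prod_XsubC.
by case.
Qed.

Lemma spectrum_sums n (M : 'M[algC]_n.+1) :
  \sum_(z <- spectrum M) z = \tr M /\
  \sum_(z <- spectrum M) z ^+ 2 = \tr (M *m M).
Proof.
have [P Pu PT] := Schur M (ltn0Sn n).
have PU : P \in unitmx by apply: unitarymx_unit.
move: PT; rewrite /similar_to conjumx // => PT.
set T := P *m M *m invmx P in PT.
set D := [seq T i i | i <- enum 'I_n.+1].
have pe : perm_eq (spectrum M) D.
  apply: prod_XsubC_eq; rewrite -spectrumP -(char_poly_conj M PU) -/T.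
  by rewrite char_poly_trig // big_map big_enum.
have trT : forall X : 'M[algC]_n.+1, \tr (P *m X *m invmx P) = \tr X.
  by move=> X; rewrite mxtrace_mulC mulmxA mulVmx // mul1mx.
split.
  rewrite (perm_big _ pe) big_map big_enum /= -(trT M).
  by [].
rewrite (perm_big _ pe) big_map big_enum /= -(trT (M *m M)).
have -> : P *m (M *m M) *m invmx P = T *m T.
  by rewrite /T !mulmxA mulmxKV.
rewrite /mxtrace; apply: eq_bigr => i _.
rewrite [(T *m T) i i]mxE expr2 (bigD1 i) //= big1 ?addr0 // => j ji.
have [lt|lt|eq] := ltngtP i j.
- by move/is_trig_mxP: PT => /(_ _ _ lt) ->; rewrite mul0r.
- by move/is_trig_mxP: PT => /(_ _ _ lt) ->; rewrite mulr0.
- by move: ji; rewrite -(inj_eq val_inj) /= eq eqxx.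
Qed.

Lemma spectrum_roots n (M : 'M[algC]_n.+1) (a b c : algC) :
  (M - a%:M) *m (M - b%:M) *m (M - c%:M) = 0 ->
  forall z, z \in spectrum M -> [|| z == a, z == b | z == c].
Proof.
move=> H z zS.
pose p := ('X - a%:P) * ('X - b%:P) * ('X - c%:P).
have hp : horner_mx M p = 0.
  by rewrite /p !rmorphM !rmorphB /= horner_mx_X !horner_mx_C.
have rc : root (char_poly M) z by rewrite spectrumP root_prod_XsubC.
have : root p z.
  by rewrite -root_mxminpoly in rc; apply: (root_dvdp (mxminpoly_min hp)).
by rewrite /p !rootM !root_XsubC orbA.
Qed.
Lemma sum_const_seq (S : seq algC) (c : algC) :
  \sum_(z <- S) c = (size S)%:R * c.
Proof.
elim: S => [|x S IH]; first by rewrite big_nil mul0r.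
by rewrite big_cons IH /= -add1n natrD mulrDl mul1r.
Qed.

Lemma sum_quad (S : seq algC) (a b c : algC) :
  \sum_(z <- S) (a * z ^+ 2 + b * z + c) =
  a * \sum_(z <- S) z ^+ 2 + b * \sum_(z <- S) z + (size S)%:R * c.
Proof. by rewrite !big_split /= -!mulr_sumr sum_const_seq. Qed.

Lemma energy_formula (S : seq algC) (K r s : algC) :
  {in S, forall z, [|| z == K, z == r | z == s]} -> 0 <= K -> 0 <= r -> s < 0 ->
  \sum_(z <- S) z = 0 -> \sum_(z <- S) z ^+ 2 = (size S)%:R * K ->
  \sum_(z <- S) `|z| = -2 * s * (size S)%:R * K * (1 + r) / ((s - K) * (s - r)).
Proof.
move=> HS K0 r0 s0 S1 S2.
have sK : s - K != 0 by rewrite subr_eq0 (lt_eqF (lt_le_trans s0 K0)).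
have sr : s - r != 0 by rewrite subr_eq0 (lt_eqF (lt_le_trans s0 r0)).
set D := (s - K) * (s - r).
have D0 : D != 0 by rewrite mulf_neq0.
transitivity (\sum_(z <- S) ((- 2 * s / D) * z ^+ 2 + (1 + 2 * s / D * (K + r)) * z
                + (- 2 * s / D * (K * r)))).
  rewrite big_seq_cond [RHS]big_seq_cond; apply: eq_bigr => z /andP[zS _].
  case/or3P: (HS z zS) => /eqP ->.
  - rewrite ger0_norm //; rewrite /D; field; exact/andP.
  - rewrite ger0_norm //; rewrite /D; field; exact/andP.
  - rewrite ltr0_norm //; rewrite /D; field; exact/andP.
rewrite sum_quad S1 S2 /D; field; exact/andP.
Qed.

Lemma count_lagrange (S : seq algC) a b c : a != b -> a != c ->
  {in S, forall z, [|| z == a, z == b | z == c]} ->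
  (count_mem a S)%:R = (\sum_(z <- S) z ^+ 2 - (b + c) * \sum_(z <- S) z
                        + (size S)%:R * (b * c)) / ((a - b) * (a - c)).
Proof.
move=> ab ac HS.
have ab' : a - b != 0 by rewrite subr_eq0.
have ac' : a - c != 0 by rewrite subr_eq0.
have -> : (count_mem a S)%:R = \sum_(z <- S) ((z == a)%:R : algC).
  elim: S {HS} => [|x S IH]; first by rewrite big_nil.
  by rewrite big_cons /= natrD IH.
transitivity (\sum_(z <- S) ((1 / ((a - b) * (a - c))) * z ^+ 2
   + (- (b + c) / ((a - b) * (a - c))) * z + (b * c / ((a - b) * (a - c))))).
  rewrite big_seq_cond [RHS]big_seq_cond; apply: eq_bigr => z /andP[zS _].
  case/or3P: (HS z zS) => /eqP ->.
  - rewrite eqxx /=; field; exact/andP.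
  - rewrite eq_sym (negbTE ab) /=; field; exact/andP.
  - rewrite eq_sym (negbTE ac) /=; field; exact/andP.
rewrite sum_quad; field; exact/andP.
Qed.

Lemma perm_three (S1 S2 : seq algC) a b c : a != b -> a != c -> b != c ->
  {in S1, forall z, [|| z == a, z == b | z == c]} ->
  {in S2, forall z, [|| z == a, z == b | z == c]} ->
  size S1 = size S2 -> \sum_(z <- S1) z = \sum_(z <- S2) z ->
  \sum_(z <- S1) z ^+ 2 = \sum_(z <- S2) z ^+ 2 -> perm_eq S1 S2.
Proof.
move=> ab ac bc H1 H2 sz s1 s2; apply/allP => x _ /=; apply/eqP.
have [xa|xa] := boolP [|| x == a, x == b | x == c]; last first.
  have n1 : x \notin S1 by apply/negP => /H1; rewrite (negbTE xa).
  have n2 : x \notin S2 by apply/negP => /H2; rewrite (negbTE xa).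
  by move/count_memPn: n1 ->; move/count_memPn: n2 ->.
apply/eqP; rewrite -(eqr_nat algC); apply/eqP.
case/or3P: xa => /eqP ->.
- by rewrite !(count_lagrange ab ac) // sz s1 s2.
- have ba : b != a by rewrite eq_sym.
  have H1' : {in S1, forall z, [|| z == b, z == a | z == c]}.
    by move=> z /H1; case/or3P=> ->; rewrite ?orbT.
  have H2' : {in S2, forall z, [|| z == b, z == a | z == c]}.
    by move=> z /H2; case/or3P=> ->; rewrite ?orbT.
  by rewrite !(count_lagrange ba bc) // sz s1 s2.
- have ca : c != a by rewrite eq_sym.
  have cb : c != b by rewrite eq_sym.
  have H1' : {in S1, forall z, [|| z == c, z == a | z == b]}.
    by move=> z /H1; case/or3P=> ->; rewrite ?orbT.
  have H2' : {in S2, forall z, [|| z == c, z == a | z == b]}.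
    by move=> z /H2; case/or3P=> ->; rewrite ?orbT.
  by rewrite !(count_lagrange ca cb) // sz s1 s2.
Qed.
Lemma sum_bool_card N (P : pred 'I_N) :
  \sum_(l < N) ((P l)%:R : algC) = #|P|%:R.
Proof.
rewrite -sum1_card natr_sum [RHS]big_mkcond /=; apply: eq_bigr => l _.
by rewrite unfold_in; case: (P l).
Qed.

Lemma adjmx_sym N (adj : rel 'I_N) : simple_graph adj -> (adjmx adj)^T = adjmx adj.
Proof. by case=> sym _; apply/matrixP => i j; rewrite !mxE sym. Qed.

Lemma adjmxJ N (adj : rel 'I_N) k : simple_graph adj ->
  (forall u, #|[set w | adj u w]| = k) ->
  adjmx adj *m (const_mx 1 : 'M[algC]_N) = k%:R *: const_mx 1 /\
  const_mx 1 *m adjmx adj = k%:R *: (const_mx 1 : 'M[algC]_N).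
Proof.
move=> sg deg.
have h1 : adjmx adj *m (const_mx 1 : 'M[algC]_N) = k%:R *: (const_mx 1 : 'M[algC]_N).
  apply/matrixP => i j; rewrite !mxE.
  under eq_bigr do rewrite !mxE mulr1.
  by rewrite sum_bool_card -(deg i) cardsE mulr1.
split=> //.
case: sg => sym _.
apply/matrixP => i j; rewrite !mxE.
under eq_bigr do rewrite !mxE mul1r sym.
by rewrite sum_bool_card -(deg j) cardsE mulr1.
Qed.

Lemma adjmx_sq N (adj : rel 'I_N) k e d : srg adj k e d ->
  adjmx adj *m adjmx adj = k%:R%:M + e%:R *: adjmx adj
     + d%:R *: (const_mx 1 - 1%:M - adjmx adj) :> 'M[algC]_N.
Proof.
case=> [[sym irr] [deg _ _ He Hd]].
apply/matrixP => i j; rewrite !mxE.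
under eq_bigr do rewrite !mxE -natrM mulnb [adj _ j]sym.
rewrite sum_bool_card -cardsE -/(common_nbrs adj i j).
have [ij|ij] := eqVneq i j.
  subst j; rewrite (negbTE (irr i)) /common_nbrs.
  under eq_finset do rewrite andbb.
  by rewrite deg /=; ring.
case: (boolP (adj i j)) => aij.
  by rewrite He //=; ring.
by rewrite Hd //=; ring.
Qed.

Lemma adjmx_tr N (adj : rel 'I_N) k e d : srg adj k e d ->
  \tr (adjmx adj) = 0 /\ \tr (adjmx adj *m adjmx adj) = N%:R * k%:R.
Proof.
move=> H; have [[sym irr] _] := H; split.
  by rewrite /mxtrace big1 // => i _; rewrite mxE (negbTE (irr i)).
have t0 : \tr (adjmx adj) = 0.
  by rewrite /mxtrace big1 // => i _; rewrite mxE (negbTE (irr i)).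
have tJ : \tr (const_mx 1 : 'M[algC]_N) = N%:R.
  by rewrite /mxtrace (eq_bigr (fun _ => 1)) ?sumr_const ?card_ord // => i _; rewrite mxE.
rewrite (adjmx_sq H) !mxtraceD !mxtraceZ !mxtraceD !raddfN /= mxtrace_scalar mxtrace1 t0 tJ.
ring.
Qed.

Lemma adjmx_compl N (adj : rel 'I_N) : simple_graph adj ->
  adjmx (complement adj) = const_mx 1 - 1%:M - adjmx adj :> 'M[algC]_N.
Proof.
case=> sym irr; apply/matrixP => i j; rewrite !mxE /complement.
have [ij|ij] := eqVneq i j.
  by subst j; rewrite (negbTE (irr i)) /=; ring.
by case: (adj i j) => /=; ring.
Qed.

Lemma srg_bounds N (adj : rel 'I_N) k e d : srg adj k e d ->
  [/\ (0 < k)%N, (k.+2 <= N)%N, (e < k)%N & (d <= k)%N].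
Proof.
case=> [[sym irr] [deg [u1 [v1 [uv1 nadj1]]] [u2 [v2 a2]] He Hd]].
split.
- by rewrite -(deg u2); apply/card_gt0P; exists v2; rewrite inE.
- have sub : [set w | adj u1 w] \subset ~: [set u1; v1].
    apply/subsetP => w; rewrite !inE => aw; apply/negP => /orP[] /eqP ew.
      by subst w; rewrite (negbTE (irr u1)) in aw.
    by subst w; rewrite (negbTE nadj1) in aw.
  have := subset_leq_card sub; rewrite deg.
  move=> kle; have h := cardsC [set u1; v1]; rewrite cards2 uv1 card_ord in h.
  by rewrite -h add2n !ltnS.
- have sub : [set w | adj u2 w && adj v2 w] \subset [set w | adj u2 w] :\ v2.
    apply/subsetP => w; rewrite !inE => /andP[a b]; rewrite a andbT.
    by apply/eqP => ew; subst w; rewrite (negbTE (irr v2)) in b.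
  have := subset_leq_card sub; rewrite -/(common_nbrs adj u2 v2) He //.
  have := cardsD1 v2 [set w | adj u2 w]; rewrite inE a2 deg add1n => ->.
  by [].
- have sub : [set w | adj u1 w && adj v1 w] \subset [set w | adj u1 w].
    by apply/subsetP => w; rewrite !inE => /andP[].
  by have := subset_leq_card sub; rewrite -/(common_nbrs adj u1 v1) Hd // deg.
Qed.
Lemma mx_alg n (A J : 'M[algC]_n.+1) (N K t q dd r s : algC) :
  J *m J = N *: J -> A *m J = K *: J -> J *m A = K *: J ->
  A *m A = q%:M + t *: A + dd *: J -> r + s = t -> r * s = - q ->
  (A - r%:M) *m (A - s%:M) *m (A - K%:M) = 0 /\
  ((J - 1%:M - A) - (-1 - s)%:M) *m ((J - 1%:M - A) - (-1 - r)%:M)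
     *m ((J - 1%:M - A) - (N - 1 - K)%:M) = 0.
Proof.
move=> JJ AJ JA AA rs1 rs2.
have XY : (A - r%:M) *m (A - s%:M) = dd *: J.
  rewrite mulmxBl !mulmxBr AA mul_mx_scalar !mul_scalar_mx.
  apply/matrixP => i j; rewrite !mxE.
  have -> : t = r + s by rewrite rs1.
  have -> : q = - (r * s) by rewrite rs2 opprK.
  ring.
split.
  rewrite XY -scalemxAl mulmxBr JA mul_mx_scalar subrr scaler0 //.
have XY2 : ((J - 1%:M - A) - (-1 - s)%:M) *m ((J - 1%:M - A) - (-1 - r)%:M)
           = (N - 2 * K + t + dd) *: J.
  rewrite !mulmxBl !mulmxBr ?mulmxBl ?mulmx1 ?mul1mx ?JJ ?JA ?AJ ?AA
          !mul_mx_scalar !mul_scalar_mx.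
  apply/matrixP => i j; rewrite !mxE.
  have -> : t = r + s by rewrite rs1.
  have -> : q = - (r * s) by rewrite rs2 opprK.
  ring.
rewrite XY2 -scalemxAl !mulmxBr JJ mulmx1 JA mul_mx_scalar.
apply/matrixP => i j; rewrite !mxE; ring.
Qed.
Lemma exists_rs_R (t q : algR) : 0 <= q -> t + 1 <= q ->
  exists r s : algR, [/\ r + s = t, r * s = - q, 0 <= r & s <= -1].
Proof.
move=> q0 tq.
set D := t ^+ 2 + 4 * q.
have D0 : 0 <= D by rewrite /D; nra.
set dl := Num.sqrt D.
have dl0 : 0 <= dl by apply: sqrtr_ge0.
have dl2 : dl ^+ 2 = D by rewrite sqr_sqrtr.
have h1 : - t <= dl by rewrite /D in dl2; nra.
have h2 : t + 2 <= dl by rewrite /D in dl2; nra.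
exists ((t + dl) / 2), ((t - dl) / 2); split.
- by field.
- rewrite /D in dl2; nra.
- lra.
- lra.
Qed.

Lemma algR_le (x y : algR) : (algRval x <= algRval y) = (x <= y).
Proof. by []. Qed.

Lemma exists_rs (k e d : nat) : (e < k)%N -> (d <= k)%N ->
  exists r s : algC, [/\ r + s = e%:R - d%:R, r * s = d%:R - k%:R,
                        0 <= r & s <= -1].
Proof.
move=> ek dk.
have q0 : 0 <= (k%:R - d%:R : algR) by rewrite subr_ge0 ler_nat.
have tq : (e%:R - d%:R) + 1 <= (k%:R - d%:R : algR).
  have : (e.+1%:R <= k%:R :> algR) by rewrite ler_nat.
  rewrite -natr1; lra.
have [r [s [h1 h2 h3 h4]]] := exists_rs_R q0 tq.
exists (algRval r), (algRval s); split.
- by rewrite -rmorphD h1 rmorphB !rmorph_nat.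
- by rewrite -rmorphM h2 rmorphN rmorphB !rmorph_nat opprB.
- by [].
- by [].
Qed.
Lemma rat_root_int (r s : algC) (t q : int) :
  r + s = t%:~R -> r * s = q%:~R -> s \in Crat -> s \in Num.int.
Proof.
move=> h1 h2 sQ; apply: Cint_rat_Aint => //.
pose p := ('X - r%:P) * ('X - s%:P).
have ep : p = 'X^2 - (t%:~R)%:P * 'X + (q%:~R)%:P.
  rewrite /p -h1 -h2 !rmorphD !rmorphM /=; ring.
apply: (@root_monic_Aint p).
- by rewrite /p rootM !root_XsubC eqxx orbT.
- by rewrite /p monicMl ?monicXsubC.
- rewrite ep; apply/polyOverP => i.
  rewrite coefD coefB coefXn mulrC coefXM !coefC.
  case: i => [|[|[|i]]] /=;
  by rewrite ?mulr0n ?mulr1n ?subr0 ?add0r ?addr0 ?sub0r ?rpredN ?rpredD ?rpredB ?intr_int ?rpred0 ?rpred1.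
Qed.
Lemma spectral_data n (adj : rel 'I_n.+1) k e d (r s : algC) : srg adj k e d ->
  r + s = e%:R - d%:R -> r * s = d%:R - k%:R ->
  [/\ {in spectrum (adjmx adj), forall z, [|| z == k%:R, z == r | z == s]},
      {in spectrum (adjmx (complement adj)),
         forall z, [|| z == n.+1%:R - 1 - k%:R, z == -1 - s | z == -1 - r]},
      \sum_(z <- spectrum (adjmx adj)) z = 0 /\
        \sum_(z <- spectrum (adjmx adj)) z ^+ 2 = n.+1%:R * k%:R,
      \sum_(z <- spectrum (adjmx (complement adj))) z = 0 /\
        \sum_(z <- spectrum (adjmx (complement adj))) z ^+ 2
           = n.+1%:R * (n.+1%:R - 1 - k%:R)
    & size (spectrum (adjmx adj)) = n.+1 /\
      size (spectrum (adjmx (complement adj))) = n.+1].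
Proof.
move=> H rs1 rs2.
have [sg [deg _ _ _ _]] := H.
set A := adjmx adj.
set J := const_mx 1 : 'M[algC]_n.+1.
have [AJ JA] := adjmxJ sg deg.
have JJ : J *m J = n.+1%:R *: J.
  apply/matrixP => i j; rewrite !mxE.
  under eq_bigr do rewrite !mxE mulr1.
  by rewrite sumr_const card_ord mulr1.
have AA : A *m A = (k%:R - d%:R)%:M + (e%:R - d%:R) *: A + d%:R *: J.
  rewrite /A (adjmx_sq H); apply/matrixP => i j; rewrite !mxE; ring.
have rs2' : r * s = - (k%:R - d%:R) by rewrite rs2 opprB.
have [X1 X2] := mx_alg JJ AJ JA AA rs1 rs2'.
have Bdef := adjmx_compl sg; rewrite -/A -/J in Bdef.
have [t0 t2] := adjmx_tr H; rewrite -/A in t0 t2.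
have tJ : \tr J = n.+1%:R.
  by rewrite /mxtrace (eq_bigr (fun _ => 1)) ?sumr_const ?card_ord // => i _; rewrite mxE.
split.
- move=> z /(spectrum_roots X1); case/or3P => ->; by rewrite ?orbT.
- rewrite Bdef => z /(spectrum_roots X2); case/or3P => ->; by rewrite ?orbT.
- by have [-> ->] := spectrum_sums A.
- have [-> ->] := spectrum_sums (adjmx (complement adj)); rewrite Bdef.
  split.
    by rewrite !mxtraceD !raddfN /= tJ mxtrace1 t0; ring.
  rewrite !mulmxBl !mulmxBr ?mulmx1 ?mul1mx JJ JA AJ AA.
  rewrite !mxtraceD !raddfN /= !mxtraceD !mxtraceZ !raddfN /= !mxtraceD ?mxtraceZ.
  rewrite ?mxtrace_scalar ?mxtrace1 t0 tJ; ring.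
- by rewrite !spectrum_size.
Qed.
Lemma eq_lin (x y u v : algC) : x - y = u - v -> u = v -> x = y.
Proof. by move=> h uv; apply/eqP; rewrite -subr_eq0 h uv subrr. Qed.

Lemma srg_identity n (adj : rel 'I_n.+1) k e d : srg adj k e d ->
  (k + e * k + d * n.+1 = k * k + d + d * k)%N.
Proof.
move=> H; have [sg [deg _ _ _ _]] := H.
set A := adjmx adj.
set J := const_mx 1 : 'M[algC]_n.+1.
have [AJ JA] := adjmxJ sg deg.
have JJ : J *m J = n.+1%:R *: J.
  apply/matrixP => i j; rewrite !mxE.
  under eq_bigr do rewrite !mxE mulr1.
  by rewrite sumr_const card_ord mulr1.
have AA : A *m A = (k%:R - d%:R)%:M + (e%:R - d%:R) *: A + d%:R *: J.
  rewrite /A (adjmx_sq H); apply/matrixP => i j; rewrite !mxE; ring.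
have h : (A *m A) *m J = k%:R *: (k%:R *: J) by rewrite -mulmxA AJ -scalemxAr AJ.
rewrite AA !mulmxDl mul_scalar_mx -!scalemxAl AJ JJ in h.
have := congr1 (fun M : 'M[algC]_n.+1 => M ord0 ord0) h; rewrite !mxE /= => h2.
apply/eqP; rewrite -(eqr_nat algC) !natrD !natrM; apply/eqP.
apply: (eq_lin _ h2); ring.
Qed.
Lemma oa_forward (N k e d : nat) (ri si : int) :
  ri + si = e%:Z - d%:Z -> ri * si = d%:Z - k%:Z ->
  (N%:Z - k%:Z - 1) * si + k%:Z * (1 + ri) = 0 ->
  0 <= ri -> si <= -1 -> (0 < k)%N -> (k.+2 <= N)%N -> k%:Z != N%:Z - k%:Z - 1 ->
  (k + e * k + d * N = k * k + d + d * k)%N ->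
  exists n m : nat, [/\ (0 < n)%N, (0 < m)%N, m != n.+1, (2 * m)%N != n.+1
     & [/\ (N%:Z = (n%:Z) ^+ 2), (k%:Z = m%:Z * (n%:Z - 1)),
           (e%:Z = m%:Z ^+ 2 - 3 * m%:Z + n%:Z) & (d%:Z = m%:Z * (m%:Z - 1))]].
Proof.
move=> h1 h2 h3 r0 s1 k0 kN kK h6.
have [m hm] : exists m : nat, si = - m%:Z.
  by exists (absz si); lia.
have [n hn] : exists n : nat, ri = n%:Z - m%:Z.
  by exists (absz (ri + m%:Z)); lia.
subst si ri.
have m1 : (1 <= m)%N by lia.
have mn : (m <= n)%N by lia.
have h6' : (k%:Z + e%:Z * k%:Z + d%:Z * N%:Z = k%:Z * k%:Z + d%:Z + d%:Z * k%:Z)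
  by lia.
have hk : k%:Z = d%:Z + m%:Z * (n%:Z - m%:Z) by lia.
have he : e%:Z = d%:Z + n%:Z - 2 * m%:Z by lia.
have h3' : m%:Z * (N%:Z - k%:Z - 1) = k%:Z * (n%:Z + 1 - m%:Z) by lia.
have h7 : d%:Z * (N%:Z - 1 - k%:Z) = k%:Z * (m%:Z - 1) * (n%:Z - m%:Z + 1).
  rewrite hk in h6' *; rewrite he in h6'; nia.
have h8 : k%:Z * (n%:Z + 1 - m%:Z) * (d%:Z - m%:Z * (m%:Z - 1)) = 0.
  nia.
have hd : d%:Z = m%:Z * (m%:Z - 1).
  have nz : k%:Z * (n%:Z + 1 - m%:Z) != 0 by rewrite mulf_neq0 //; lia.
  by move/eqP: h8; rewrite mulf_eq0 (negbTE nz) /= subr_eq0 => /eqP.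
have hk2 : k%:Z = m%:Z * (n%:Z - 1) by rewrite hk hd; ring.
have hN1 : N%:Z - k%:Z - 1 = (n%:Z - 1) * (n%:Z + 1 - m%:Z).
  apply: (@mulfI _ m%:Z); first by lia.
  by rewrite h3' hk2; ring.
have hN : N%:Z = n%:Z ^+ 2.
  have -> : N%:Z = (N%:Z - k%:Z - 1) + k%:Z + 1 by ring.
  by rewrite hN1 hk2; ring.
exists n, m; split.
- lia.
- lia.
- lia.
- apply/eqP => h; apply: (negP kK); apply/eqP.
  have e2 : n%:Z + 1 = 2 * m%:Z by lia.
  by rewrite hN1 e2 hk2; ring.
- split => //.
  + rewrite he hd; ring.
Qed.
Lemma pnatrC (n : nat) : ((n%:Z)%:~R : algC) = n%:R.
Proof. by []. Qed.

Lemma int2C (x y : int) : x = y -> (x%:~R : algC) = y%:~R.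
Proof. by move=> ->. Qed.

Lemma oa_to_C (N k e d n m : nat) :
  [/\ N%:Z = n%:Z ^+ 2, k%:Z = m%:Z * (n%:Z - 1),
      e%:Z = m%:Z ^+ 2 - 3 * m%:Z + n%:Z & d%:Z = m%:Z * (m%:Z - 1)] ->
  [/\ (N%:R : algC) = n%:R ^+ 2, (k%:R : algC) = m%:R * (n%:R - 1),
      (e%:R : algC) = m%:R ^+ 2 - 3 * m%:R + n%:R & (d%:R : algC) = m%:R * (m%:R - 1)].
Proof.
case=> /int2C h1 /int2C h2 /int2C h3 /int2C h4.
rewrite !(rmorphD, rmorphB, rmorphM, rmorphXn, rmorph_nat, rmorph1, pnatrC) /= in h1 h2 h3 h4.
rewrite ?intrN ?intrM /= in h3.
split.
- by rewrite h1 expr2.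
- by rewrite h2.
- by rewrite h3.
- by rewrite h4.
Qed.
Lemma oa_backward_int (N k a b : nat) : (0 < k)%N -> (k.+2 <= N)%N -> (0 < a)%N ->
  b != a.+1 -> (2 * b)%N != a.+1 -> N%:Z = a%:Z ^+ 2 -> k%:Z = b%:Z * (a%:Z - 1) ->
  (b <= a)%N /\ (k + k + 1)%N != N.
Proof.
move=> k0 kN a0 ba1 b2a hN hk.
rewrite expr2 in hN.
have a2 : (2 <= a)%N.
  case: (ltnP 1 a) => // a1.
  have a1' : a = 1%N by lia.
  subst a; lia.
split.
  case: (leqP b a) => // ab.
  have b2 : (a.+2 <= b)%N by lia.
  have : ((a%:Z + 2) * (a%:Z - 1) <= b%:Z * (a%:Z - 1))%R.
    by rewrite ler_wpM2r; lia.
  nia.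
apply/eqP => h.
have h2 : ((a%:Z - 1) * (2 * b%:Z - a%:Z - 1) = 0)%R by nia.
move/eqP: h2; rewrite mulf_eq0 => /orP[/eqP h3|/eqP h3]; lia.
Qed.

Unset Implicit Arguments.

Theorem mainTheorem14 (N : nat) (adj : rel 'I_N) (k e d : nat) :
  srg adj k e d ->
  ((energy adj = energy (complement adj) /\ ~ isospectral adj (complement adj))
   <->
   exists n m : nat, [/\ (0 < n)%N, (0 < m)%N, m != n.+1, (2 * m)%N != n.+1
     & [/\ (N%:Z = (n%:Z) ^+ 2), (k%:Z = m%:Z * (n%:Z - 1)),
           (e%:Z = m%:Z ^+ 2 - 3 * m%:Z + n%:Z) & (d%:Z = m%:Z * (m%:Z - 1))]]).
Proof.
move=> H.
have [k0 kN ek dk] := srg_bounds H.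
case: N adj H kN => [|n] adj H kN; first by [].
have [r [s [rs1 rs2 r0 s1]]] := exists_rs ek dk.
have [HS HSb [S1 S2] [Sb1 Sb2] [szS szSb]] := spectral_data H rs1 rs2.
set K : algC := k%:R in HS S2 Sb2 HSb *.
set Kb : algC := n.+1%:R - 1 - K in HSb Sb2 *.
have s0 : s < 0 by apply: le_lt_trans s1 (ltrN10 _).
have K0 : 0 <= K by apply: ler0n.
have KbE : Kb = (n - k)%:R.
  rewrite /Kb /K natrB; last by lia.
  by rewrite -addn1 natrD; ring.
have Kb0 : 0 < Kb by rewrite KbE ltr0n; lia.
have rb0 : 0 <= -1 - s by rewrite subr_ge0.
have sb0 : -1 - r < 0 by rewrite subr_lt0; apply: lt_le_trans (ltrN10 _) r0.
have S2' : \sum_(z <- spectrum (adjmx adj)) z ^+ 2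
            = (size (spectrum (adjmx adj)))%:R * K by rewrite szS.
have Sb2' : \sum_(z <- spectrum (adjmx (complement adj))) z ^+ 2
            = (size (spectrum (adjmx (complement adj))))%:R * Kb by rewrite szSb.
have E1 := energy_formula HS K0 r0 s0 S1 S2'.
have E2 := energy_formula HSb (ltW Kb0) rb0 sb0 Sb1 Sb2'.
rewrite szS in E1; rewrite szSb in E2.
have sr : s - r != 0 by rewrite subr_eq0 (lt_eqF (lt_le_trans s0 r0)).
have sK : s - K != 0 by rewrite subr_eq0 (lt_eqF (lt_le_trans s0 K0)).
have rKb : -1 - r - Kb != 0 by rewrite subr_eq0 (lt_eqF (lt_trans sb0 Kb0)).
have sn0 : s != 0 by rewrite (lt_eqF s0).
have N0 : (n.+1%:R : algC) != 0 by rewrite pnatr_eq0.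
have r1 : 1 + r != 0.
  have : 0 < 1 + r by rewrite (lt_le_trans ltr01) // lerDl.
  by move/gt_eqF => ->.
have srb : -1 - r - (-1 - s) = s - r by ring.
have key : energy adj = energy (complement adj) <-> Kb * s + K * (1 + r) = 0.
  rewrite /energy E1 E2 srb.
  set C := 2 * s * n.+1%:R * (1 + r) / ((s - r) * (s - K) * (-1 - r - Kb)).
  have C0 : C != 0 by rewrite /C !mulf_neq0 ?invr_eq0 ?pnatr_eq0 // ?mulf_neq0.
  have diff : -2 * s * n.+1%:R * K * (1 + r) / ((s - K) * (s - r)) -
              -2 * (-1 - r) * n.+1%:R * Kb * (1 + (-1 - s)) / ((-1 - r - Kb) * (s - r))
              = C * (Kb * s + K * (1 + r)).
    by rewrite /C; field; apply/and3P; split.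
  split => h.
    by move/eqP: h; rewrite -subr_eq0 diff mulf_eq0 (negbTE C0) /= => /eqP.
  by apply/eqP; rewrite -subr_eq0 diff h mulr0.
have iso : isospectral adj (complement adj) -> K = Kb.
  move=> pe.
  have : \sum_(z <- spectrum (adjmx adj)) z ^+ 2
         = \sum_(z <- spectrum (adjmx (complement adj))) z ^+ 2 by apply: perm_big.
  rewrite S2 Sb2 => /eqP; rewrite (inj_eq (mulfI N0)) => /eqP.
  done.
have Kn0 : K != 0 by rewrite /K pnatr_eq0 -lt0n.
rewrite key; split.
  case=> X0 niso.
  have [KKb|KKb] := eqVneq K Kb.
    exfalso; apply: niso.
    have t1 : r + s = -1.
      have : K * (r + s + 1) = 0 by rewrite -X0 -KKb; ring.
      move/eqP; rewrite mulf_eq0 (negbTE Kn0) /= addr_eq0 => /eqP ->.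
      done.
    have e1 : -1 - s = r by rewrite -t1; ring.
    have e2 : -1 - r = s by rewrite -t1; ring.
    rewrite e1 e2 -KKb in HSb Sb2.
    apply: (perm_three (a:=K) (b:=r) (c:=s)) => //.
    - apply/eqP => Kr.
      have : ((k * k + d)%:R : algC) = 0.
        rewrite natrD natrM; apply: (eq_lin _ (esym rs2)).
        by rewrite -e2 -Kr /K; ring.
      by move/eqP; rewrite pnatr_eq0 addn_eq0 muln_eq0 orbb eqn0Ngt k0.
    - by rewrite eq_sym (lt_eqF (lt_le_trans s0 K0)).
    - by rewrite eq_sym (lt_eqF (lt_le_trans s0 r0)).
    - by rewrite szS szSb.
    - by rewrite S1 Sb1.
    - by rewrite S2 Sb2.
  have KbK : Kb - K != 0 by rewrite subr_eq0 eq_sym.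
  have hs : s * (Kb - K) = - K * (1 + (e%:R - d%:R)).
    by rewrite -rs1; apply: (eq_lin _ X0); ring.
  have sQ : s \in Crat.
    have -> : s = - K * (1 + (e%:R - d%:R)) / (Kb - K) by rewrite -hs mulfK.
    by rewrite /Kb /K ?(rpredM, rpredV, rpredN, rpredD, rpredB, rpred_nat, rpred1).
  have sZ : s \in Num.int.
    apply: (@rat_root_int r s (e%:Z - d%:Z) (d%:Z - k%:Z)) => //.
    - by rewrite rs1 intrB.
    - by rewrite rs2 intrB.
  have rZ : r \in Num.int.
    have -> : r = e%:R - d%:R - s by rewrite -rs1; ring.
    by rewrite ?(rpredB, rpred_nat).
  have [ri rE] := intrP rZ.
  have [si sE] := intrP sZ.
  subst r s.
  apply: (oa_forward (ri:=ri) (si:=si)) => //.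
  - apply: (@intr_inj algC); rewrite intrD intrB; exact: rs1.
  - apply: (@intr_inj algC); rewrite intrM intrB; exact: rs2.
  - apply: (@intr_inj algC).
    rewrite !(rmorphD, rmorphB, rmorphM, rmorph1, rmorph0) /= ?pnatrC.
    have m1 : ((-1 : int)%:~R : algC) = -1 by [].
    rewrite ?intrN ?pnatrC ?m1.
    by apply: (eq_lin _ X0); rewrite /Kb /K; ring.
  - by rewrite -(ler0z algC).
  - by rewrite -(ler_int algC) rmorphN1.
  - apply/eqP => h; apply: (negP KKb); apply/eqP.
    move/int2C: h; rewrite !(rmorphB, rmorph1) /= ?pnatrC => h.
    by apply: (eq_lin _ h); rewrite /Kb /K; ring.
  - exact: srg_identity H.
case=> a [b [a0 b0 ba1 b2a OA]].
have [hN hk he hd] := oa_to_C OA.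
have [hNz hkz hez hdz] := OA.
have [ba kk] := oa_backward_int k0 kN a0 ba1 b2a hNz hkz.
split.
  have rE : r = e%:R - d%:R - s by rewrite -rs1; ring.
  have q0 : (s - (a%:R - b%:R)) * (s + b%:R) = 0.
    apply: (eq_lin _ (esym rs2)).
    by rewrite rE hk he hd; ring.
  move/eqP: q0; rewrite mulf_eq0 => /orP[/eqP h|/eqP h].
    have hs : s = (a - b)%:R by rewrite natrB //; apply/eqP; rewrite -subr_eq0 h.
    by move: s0; rewrite hs ltrn0.
  have sb : s = - b%:R by apply/eqP; rewrite -addr_eq0 h.
  by rewrite /Kb /K rE sb hN hk he hd; ring.
move/iso => KKb.
have : ((k + k + 1)%:R : algC) = n.+1%:R.
  by rewrite !natrD; apply: (eq_lin _ KKb); rewrite /Kb /K; ring.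
by move/eqP; rewrite eqr_nat (negbTE kk).
Qed.
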